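(* Let $\ell\in\mathbb{N}$, $\alpha_j,\beta_j\in\mathbb{N}$ for $j=1,\dots,\ell$, and $q\in\mathbb{C}$ with $|q|<1$. Then $$\mathbf{R}^{\alpha_1}\big[\mathbf{y}^{\beta_1}\cdots\mathbf{R}^{\alpha_\ell}[\mathbf{y}^{\beta_\ell}]\cdots\big](1)=\mathbf{R}^{\beta_\ell}\big[\mathbf{y}^{\alpha_\ell}\mathbf{R}^{\beta_{\ell-1}}[\mathbf{y}^{\alpha_{\ell-1}}\cdots\mathbf{R}^{\beta_1}[\mathbf{y}^{\alpha_1}]\cdots]\big](1),$$ where both sides mean the value at $t=1$ of the corresponding power series in $t$.
   Context: $\mathbf{y}(t)=\frac{t}{1-t}$ and $\mathbf{y}^{\beta}$ denotes multiplication by $\mathbf{y}(t)^\beta$. $\mathbf{R}$ is the operator $\mathbf{R}[f](t)=\sum_{k\ge1}f(q^kt)$ on power series in $t$ without constant term, and $\mathbf{R}^n$ its $n$-fold composition. *)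

(* Defs.v *)
From Stdlib Require Import Reals List.
From Coquelicot Require Import Coquelicot.
Open Scope R_scope.

(* A formal power series in t with complex coefficients:
   ps n is the coefficient of t^n. *)
Definition PS := nat -> C.

Fixpoint cpow (z : C) (n : nat) : C :=
  match n with O => RtoC 1 | S m => Cmult z (cpow z m) end.

(* Sum of a complex series (real and imaginary parts summed separately);
   it is the genuine sum whenever the series converges. *)
Definition CSeries (u : nat -> C) : C :=
  (Series (fun k => fst (u k)), Series (fun k => snd (u k))).

Fixpoint csum_upto (f : nat -> C) (n : nat) : C :=
  match n with
  | O => f O
  | S m => Cplus (csum_upto f m) (f (S m))
  end.

Definition ps_mul (a b : PS) : PS :=
  fun n => csum_upto (fun i => Cmult (a i) (b (n - i)%nat)) n.

Definition ps_one : PS := fun n => match n with O => RtoC 1 | _ => RtoC 0 end.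

(* y(t) = t/(1-t) = sum_{n>=1} t^n. *)
Definition ps_y : PS := fun n => match n with O => RtoC 0 | _ => RtoC 1 end.

Definition ps_ypow (beta : nat) : PS := Nat.iter beta (ps_mul ps_y) ps_one.
Definition yop (beta : nat) (f : PS) : PS := ps_mul (ps_ypow beta) f.

(* R[f](t) = sum_{k>=1} f(q^k t): the coefficient of t^n of f(q^k t) is
   f_n q^{k n}; summing over k >= 1 coefficientwise. *)
Definition Rop (q : C) (f : PS) : PS :=
  fun n => CSeries (fun k => Cmult (f n) (cpow q ((S k) * n)%nat)).

Definition Rpow (q : C) (alpha : nat) (f : PS) : PS := Nat.iter alpha (Rop q) f.

(* Nested expression  R^{a1}[ y^{b1} R^{a2}[ y^{b2} ... R^{al}[ y^{bl} ] ... ] ]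
   for the list [(a1,b1); ...; (al,bl)]. *)
Fixpoint nest (q : C) (s : list (nat * nat)) : PS :=
  match s with
  | nil => ps_one
  | (a, b) :: s' => Rpow q a (yop b (nest q s'))
  end.

(* "value at t = 1" of a power series: the sum of its coefficients. *)
Definition has_value_at_1 (f : PS) (v : C) : Prop := is_series f v.

(* Main.v *)
Require Import Defs.
From Stdlib Require Import Reals List Lia Lra FunctionalExtensionality.
From Coquelicot Require Import Coquelicot.
Open Scope R_scope.

Definition Yop (f : PS) : PS := ps_mul ps_y f.

Lemma csum_shift (g : nat -> C) n :
  csum_upto g (S n) = Cplus (g O) (csum_upto (fun i => g (S i)) n).
Proof.
  induction n as [|n IH].
  - reflexivity.
  - change (csum_upto g (S (S n))) with (Cplus (csum_upto g (S n)) (g (S (S n)))).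
    rewrite IH. simpl. ring.
Qed.

Lemma csum_ext (f g : nat -> C) n : (forall i, f i = g i) -> csum_upto f n = csum_upto g n.
Proof. intros H; induction n; simpl; rewrite ?IHn, ?H; reflexivity. Qed.

Lemma csum_plus (f g : nat -> C) n :
  csum_upto (fun i => Cplus (f i) (g i)) n = Cplus (csum_upto f n) (csum_upto g n).
Proof. induction n; simpl; rewrite ?IHn; ring. Qed.

Lemma csum_zero n : csum_upto (fun _ => RtoC 0) n = RtoC 0.
Proof. induction n; simpl; rewrite ?IHn; ring. Qed.

Lemma Yop_0 f : Yop f O = RtoC 0.
Proof. unfold Yop, ps_mul, ps_y. simpl. ring. Qed.

Lemma Yop_Sform f N : Yop f (S N) = csum_upto (fun i => f (N - i)%nat) N.
Proof.
  unfold Yop, ps_mul. rewrite csum_shift.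
  rewrite (csum_ext _ (fun i => f (N - i)%nat)) by (intros; simpl; ring).
  simpl. ring.
Qed.

Lemma Yop_S f N : Yop f (S N) = Cplus (Yop f N) (f N).
Proof.
  destruct N as [|n].
  - rewrite Yop_Sform, Yop_0. simpl. ring.
  - rewrite !Yop_Sform, csum_shift. simpl (S n - 0)%nat.
    rewrite (csum_ext (fun i => f (S n - S i)%nat) (fun i => f (n - i)%nat)) by reflexivity.
    ring.
Qed.

Lemma ps_mul_Yop h g : ps_mul (Yop h) g = Yop (ps_mul h g).
Proof.
  apply functional_extensionality; intro N.
  induction N as [|N IH].
  - rewrite Yop_0. unfold ps_mul. simpl. rewrite Yop_0. ring.
  - rewrite Yop_S, <- IH. unfold ps_mul at 1. rewrite csum_shift, Yop_0.
    rewrite (csum_ext _ (fun i => Cplus (Cmult (Yop h i) (g (N - i)%nat)) (Cmult (h i) (g (N - i)%nat)))).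
    2: { intros i. simpl. rewrite Yop_S. ring. }
    rewrite csum_plus. unfold ps_mul. ring.
Qed.

Lemma ps_mul_one g : ps_mul ps_one g = g.
Proof.
  apply functional_extensionality; intro N. unfold ps_mul.
  destruct N as [|n].
  - simpl. ring.
  - rewrite csum_shift.
    rewrite (csum_ext _ (fun _ => RtoC 0)) by (intros; simpl; ring).
    rewrite csum_zero. simpl. ring.
Qed.

Inductive letter := LD | LY.

Fixpoint ev (q : C) (w : list letter) (f : PS) : PS :=
  match w with
  | nil => f
  | LD :: w' => Rop q (ev q w' f)
  | LY :: w' => Yop (ev q w' f)
  end.

Lemma ev_app q w1 w2 f : ev q (w1 ++ w2) f = ev q w1 (ev q w2 f).
Proof. induction w1 as [|[|] w1 IH]; simpl; rewrite ?IH; reflexivity. Qed.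

Fixpoint blocks (s : list (nat * nat)) : list letter :=
  match s with
  | nil => nil
  | (a, b) :: s' => repeat LD a ++ repeat LY b ++ blocks s'
  end.

Lemma ev_repeat_LD q a f : ev q (repeat LD a) f = Rpow q a f.
Proof. induction a; simpl; rewrite ?IHa; reflexivity. Qed.

Lemma ev_repeat_LY q b f : ev q (repeat LY b) f = yop b f.
Proof.
  induction b; simpl.
  - unfold yop, ps_ypow. simpl. now rewrite ps_mul_one.
  - rewrite IHb. unfold yop. simpl. fold (Yop (ps_ypow b)).
    unfold ps_ypow. now rewrite ps_mul_Yop.
Qed.

Lemma nest_ev q s f0 : f0 = ps_one -> nest q s = ev q (blocks s) f0.
Proof.
  intros ->. induction s as [|[a b] s IH]; simpl; [reflexivity|].
  rewrite !ev_app, ev_repeat_LD, ev_repeat_LY, IH. reflexivity.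
Qed.

Definition swl (x : letter) := match x with LD => LY | LY => LD end.
Definition dual (w : list letter) := rev (map swl w).

Lemma blocks_app s1 s2 : blocks (s1 ++ s2) = blocks s1 ++ blocks s2.
Proof. induction s1 as [|[a b] s IH]; simpl; rewrite ?IH, ?app_assoc; reflexivity. Qed.

Lemma rev_repeat {A} (x : A) n : rev (repeat x n) = repeat x n.
Proof.
  induction n; simpl; [reflexivity|]. rewrite IHn.
  change (x :: repeat x n) with (repeat x (S n)).
  replace (S n) with (n + 1)%nat by lia. rewrite repeat_app. reflexivity.
Qed.

Lemma blocks_dual s :
  blocks (rev (map (fun p => (snd p, fst p)) s)) = dual (blocks s).
Proof.
  induction s as [|[a b] s IH]; simpl; [reflexivity|].
  rewrite blocks_app, IH. simpl. unfold dual.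
  rewrite !map_app, !rev_app_distr, !map_repeat, !rev_repeat. simpl.
  rewrite app_nil_r, app_assoc. reflexivity.
Qed.

Lemma Series_zero : Series (fun _ => 0) = 0.
Proof.
  rewrite (Series_ext _ (fun n => 0 * 0)) by (intros; ring).
  rewrite Series_scal_l. ring.
Qed.

Lemma pow_le1 (x : R) k : 0 <= x <= 1 -> x ^ k <= 1.
Proof.
  intros Hx. induction k; simpl; [lra|].
  rewrite <- (Rmult_1_l 1). apply Rmult_le_compat; try lra. apply pow_le; lra.
Qed.

Lemma pow_decr (x : R) m n : 0 <= x <= 1 -> (m <= n)%nat -> x ^ n <= x ^ m.
Proof.
  intros Hx Hmn. replace n with (m + (n - m))%nat by lia.
  rewrite pow_add. rewrite <- (Rmult_1_r (x ^ m)) at 2.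
  apply Rmult_le_compat_l. apply pow_le; lra.
  apply pow_le1; lra.
Qed.

Lemma exR_le (a b : nat -> R) : (forall n, Rabs (a n) <= b n) -> ex_series b -> ex_series a.
Proof.
  intros H Hb. apply (@ex_series_le R_AbsRing R_CompleteNormedModule a b); auto.
Qed.

Lemma sum_n_nonneg (a : nat -> R) N : (forall n, 0 <= a n) -> 0 <= sum_n a N.
Proof.
  intros H. induction N. rewrite sum_O; auto. rewrite sum_Sn. simpl.
  unfold plus; simpl. specialize (H (S N)). lra.
Qed.

Lemma bounded_series (a : nat -> R) M :
  (forall n, 0 <= a n) -> (forall N, sum_n a N <= M) -> ex_series a /\ Series a <= M.
Proof.
  intros Hp HM.
  assert (Hinc : forall n, sum_n a n <= sum_n a (S n)).
  { intros n. rewrite sum_Sn. unfold plus; simpl. specialize (Hp (S n)). lra. }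
  pose proof (Lim_seq_correct _ (ex_lim_seq_incr _ Hinc)) as HL.
  assert (Hle := is_lim_seq_le _ _ _ _ HM HL (is_lim_seq_const M)).
  assert (Hge := is_lim_seq_le _ _ _ _ (fun N => sum_n_nonneg a N Hp) (is_lim_seq_const 0) HL).
  unfold Series.
  destruct (Lim_seq (sum_n a)) as [l| |] eqn:E; simpl in *; try contradiction.
  split; [exists l; exact HL | exact Hle].
Qed.

Lemma sum_le_Series (a : nat -> R) N :
  (forall n, 0 <= a n) -> ex_series a -> sum_n a N <= Series a.
Proof.
  intros Hp Hex. apply (is_lim_seq_incr_compare (sum_n a)).
  - apply Series_correct; exact Hex.
  - intros n. rewrite sum_Sn. unfold plus; simpl. specialize (Hp (S n)). lra.
Qed.

Lemma Series_nonneg (a : nat -> R) : (forall n, 0 <= a n) -> 0 <= Series a.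
Proof.
  intros Hp. unfold Series.
  destruct (ex_lim_seq_incr (sum_n a)) as [l Hl].
  { intros n. rewrite sum_Sn. unfold plus; simpl. specialize (Hp (S n)). lra. }
  rewrite (is_lim_seq_unique _ _ Hl).
  assert (Hge := is_lim_seq_le _ _ _ _ (fun N => sum_n_nonneg a N Hp) (is_lim_seq_const 0) Hl).
  destruct l; simpl in *; lra.
Qed.

Lemma Series_sum_n (a : nat -> nat -> R) N :
  (forall n, ex_series (fun m => a m n)) ->
  ex_series (fun m => sum_n (a m) N) /\
  Series (fun m => sum_n (a m) N) = sum_n (fun n => Series (fun m => a m n)) N.
Proof.
  intros H. induction N as [|N [IH1 IH2]].
  - rewrite sum_O. split.
    + apply (ex_series_ext (fun m => a m O)); [intros; rewrite sum_O; auto | apply H].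
    + apply Series_ext; intros; rewrite sum_O; auto.
  - split.
    + apply (ex_series_ext (fun m => plus (sum_n (a m) N) (a m (S N)))).
      intros; rewrite sum_Sn; auto. apply (@ex_series_plus R_AbsRing R_NormedModule); auto.
    + rewrite sum_Sn. rewrite <- IH2.
      rewrite (Series_ext _ (fun m => sum_n (a m) N + a m (S N))).
      2: { intros; rewrite sum_Sn; auto. }
      rewrite Series_plus; auto.
Qed.

Lemma fub_nn (x b : nat -> nat -> R) :
  (forall m n, 0 <= x m n <= b m n) -> (forall m, ex_series (b m)) ->
  ex_series (fun m => Series (b m)) ->
  (forall m, ex_series (x m)) /\ (forall n, ex_series (fun m => x m n)) /\
  ex_series (fun m => Series (x m)) /\ ex_series (fun n => Series (fun m => x m n)) /\
  Series (fun m => Series (x m)) = Series (fun n => Series (fun m => x m n)).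
Proof.
  intros Hx Hb HB.
  assert (Hrow : forall m, ex_series (x m)).
  { intros m. apply (exR_le _ (b m)); auto.
    intros n. rewrite Rabs_right; [apply Hx|apply Rle_ge, Hx]. }
  assert (Hrs_le : forall m, 0 <= Series (x m) <= Series (b m)).
  { intros m. split. apply Series_nonneg; intros; apply Hx. apply Series_le; auto. }
  assert (Hrs : ex_series (fun m => Series (x m))).
  { apply (exR_le _ (fun m => Series (b m))); auto.
    intros m. rewrite Rabs_right; [apply Hrs_le|apply Rle_ge, Hrs_le]. }
  assert (Hcol : forall n, ex_series (fun m => x m n)).
  { intros n. apply (exR_le _ (fun m => Series (x m))); auto.
    intros m. rewrite Rabs_right by apply Rle_ge, Hx.
    eapply Rle_trans; [| apply (sum_le_Series (x m) n); auto; intros; apply Hx].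
    destruct n. rewrite sum_O; lra. rewrite sum_Sn. unfold plus; simpl.
    pose proof (sum_n_nonneg (x m) n (fun k => proj1 (Hx m k))). lra. }
  assert (Hcs : ex_series (fun n => Series (fun m => x m n)) /\
                Series (fun n => Series (fun m => x m n)) <= Series (fun m => Series (x m))).
  { apply bounded_series.
    - intros n. apply Series_nonneg; intros; apply Hx.
    - intros N. destruct (Series_sum_n x N Hcol) as [E1 E2]. rewrite <- E2.
      apply Series_le; auto. intros m. split.
      apply sum_n_nonneg; intros; apply Hx. apply sum_le_Series; auto; intros; apply Hx. }
  destruct Hcs as [Hcs Hle1].
  assert (Hle2 : Series (fun m => Series (x m)) <= Series (fun n => Series (fun m => x m n))).
  { apply bounded_series.
    - intros m. apply Hrs_le.
    - intros N. destruct (Series_sum_n (fun n m => x m n) N Hrow) as [E1 E2].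
      change (sum_n (fun m => Series (x m)) N) with (sum_n (fun n => Series (fun m => x n m)) N).
      rewrite <- E2. apply Series_le; auto. intros n. split.
      apply sum_n_nonneg; intros; apply Hx. apply sum_le_Series; auto; intros; apply Hx. }
  repeat split; auto. lra.
Qed.

Lemma fub_R (a b : nat -> nat -> R) :
  (forall m n, Rabs (a m n) <= b m n) -> (forall m, ex_series (b m)) ->
  ex_series (fun m => Series (b m)) ->
  Series (fun m => Series (a m)) = Series (fun n => Series (fun m => a m n)).
Proof.
  intros Ha Hb HB.
  set (p := fun m n => (Rabs (a m n) + a m n) / 2).
  set (r := fun m n => (Rabs (a m n) - a m n) / 2).
  assert (Hp : forall m n, 0 <= p m n <= b m n).
  { intros m n; unfold p. specialize (Ha m n). pose proof (Rle_abs (a m n)).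
    pose proof (Rabs_pos (a m n)). pose proof (Rle_abs (- a m n)). rewrite Rabs_Ropp in H1. lra. }
  assert (Hr : forall m n, 0 <= r m n <= b m n).
  { intros m n; unfold r. specialize (Ha m n). pose proof (Rle_abs (a m n)).
    pose proof (Rabs_pos (a m n)). pose proof (Rle_abs (- a m n)). rewrite Rabs_Ropp in H1. lra. }
  destruct (fub_nn p b Hp Hb HB) as (Pr & Pc & Prs & Pcs & PE).
  destruct (fub_nn r b Hr Hb HB) as (Rr & Rc & Rrs & Rcs & RE).
  assert (E1 : forall m, Series (a m) = Series (p m) - Series (r m)).
  { intros m. rewrite <- Series_minus; auto. apply Series_ext; intros; unfold p, r; field. }
  assert (E2 : forall n, Series (fun m => a m n) = Series (fun m => p m n) - Series (fun m => r m n)).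
  { intros n. rewrite <- Series_minus; auto. apply Series_ext; intros; unfold p, r; field. }
  rewrite (Series_ext _ _ E1), (Series_ext _ _ E2).
  rewrite !Series_minus; auto. rewrite PE, RE. reflexivity.
Qed.

Lemma fst_le_Cmod (z : C) : Rabs (fst z) <= Cmod z.
Proof. pose proof (Rmax_Cmod z). pose proof (Rmax_l (Rabs (fst z)) (Rabs (snd z))). lra. Qed.
Lemma snd_le_Cmod (z : C) : Rabs (snd z) <= Cmod z.
Proof. pose proof (Rmax_Cmod z). pose proof (Rmax_r (Rabs (fst z)) (Rabs (snd z))). lra. Qed.

Lemma sqrt2_le2 : sqrt 2 <= 2.
Proof.
  rewrite <- (sqrt_square 2) at 2 by lra. apply sqrt_le_1_alt. lra.
Qed.

Lemma Cmod_le_comp (z : C) M : Rabs (fst z) <= M -> Rabs (snd z) <= M -> Cmod z <= 2 * M.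
Proof.
  intros H1 H2. eapply Rle_trans; [apply Cmod_2Rmax|].
  apply Rmult_le_compat; try lra. apply Rlt_le, Rlt_sqrt2_0.
  apply Rmax_case; apply Rabs_pos. apply sqrt2_le2. apply Rmax_lub; auto.
Qed.

Definition Cdom (u : nat -> C) (B : nat -> R) := (forall n, Cmod (u n) <= B n) /\ ex_series B.

Lemma Cdom_fst u B : Cdom u B -> ex_series (fun n => fst (u n)).
Proof. intros [H Hb]. apply (exR_le _ B); auto. intros n; eapply Rle_trans; [apply fst_le_Cmod|auto]. Qed.
Lemma Cdom_snd u B : Cdom u B -> ex_series (fun n => snd (u n)).
Proof. intros [H Hb]. apply (exR_le _ B); auto. intros n; eapply Rle_trans; [apply snd_le_Cmod|auto]. Qed.

Lemma Series_abs_le (a B : nat -> R) : (forall n, Rabs (a n) <= B n) -> ex_series B ->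
  Rabs (Series a) <= Series B.
Proof.
  intros H Hb. assert (Hx : ex_series (fun n => Rabs (a n))) by (apply (exR_le _ B); auto; intros; rewrite Rabs_Rabsolu; auto).
  eapply Rle_trans. apply Series_Rabs; auto.
  apply Series_le; auto. intros; split; [apply Rabs_pos|auto].
Qed.

Lemma CS_bound u B : Cdom u B -> Cmod (CSeries u) <= 2 * Series B.
Proof.
  intros [H Hb]. apply Cmod_le_comp; simpl; apply Series_abs_le; auto; intros n.
  eapply Rle_trans; [apply fst_le_Cmod|auto].
  eapply Rle_trans; [apply snd_le_Cmod|auto].
Qed.

Lemma sum_n_C (u : nat -> C) n :
  sum_n u n = (sum_n (fun k => fst (u k)) n, sum_n (fun k => snd (u k)) n).
Proof.
  induction n. rewrite !sum_O. destruct (u O); reflexivity.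
  rewrite !sum_Sn, IHn. reflexivity.
Qed.

Lemma is_series_C (u : nat -> C) a b :
  is_series (fun n => fst (u n)) a -> is_series (fun n => snd (u n)) b ->
  @is_series C_AbsRing C_NormedModule u (a, b).
Proof.
  intros Ha Hb. unfold is_series in *.
  apply filterlim_locally. intros eps.
  pose proof (proj1 (filterlim_locally _ _) Ha eps) as Ha'.
  pose proof (proj1 (filterlim_locally _ _) Hb eps) as Hb'.
  generalize (filter_and _ _ Ha' Hb'). apply filter_imp.
  intros n [H1 H2]. rewrite sum_n_C. split; assumption.
Qed.

Lemma CS_is u B : Cdom u B -> @is_series C_AbsRing C_NormedModule u (CSeries u).
Proof.
  intros H. apply is_series_C; apply Series_correct; [eapply Cdom_fst|eapply Cdom_snd]; eauto.
Qed.

Lemma CS_ext u v : (forall n, u n = v n) -> CSeries u = CSeries v.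
Proof. intros H. unfold CSeries. f_equal; apply Series_ext; intros; rewrite H; auto. Qed.

Lemma CS_plus u v B1 B2 : Cdom u B1 -> Cdom v B2 ->
  CSeries (fun n => Cplus (u n) (v n)) = Cplus (CSeries u) (CSeries v).
Proof.
  intros Hu Hv. unfold CSeries. simpl.
  rewrite (Series_plus (fun n => fst (u n)) (fun n => fst (v n))) by (eapply Cdom_fst; eauto).
  rewrite (Series_plus (fun n => snd (u n)) (fun n => snd (v n))) by (eapply Cdom_snd; eauto).
  reflexivity.
Qed.

Lemma CS_scal c u B : Cdom u B ->
  CSeries (fun n => Cmult c (u n)) = Cmult c (CSeries u).
Proof.
  intros Hu. pose proof (Cdom_fst _ _ Hu) as H1. pose proof (Cdom_snd _ _ Hu) as H2.
  unfold CSeries. simpl. destruct c as [c1 c2]. simpl.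
  rewrite (Series_ext (fun n => c1 * fst (u n) - c2 * snd (u n)) (fun n => c1 * fst (u n) + (- c2) * snd (u n))) by (intros; ring).
  rewrite (Series_plus (fun n => c1 * fst (u n))) .
  rewrite (Series_plus (fun n => c1 * snd (u n))) .
  rewrite !Series_scal_l. unfold Cmult; simpl. f_equal; ring.
  all: apply (ex_series_scal_l (K:=R_AbsRing) (V:=R_NormedModule)); auto.
Qed.

Lemma CS_zero u : (forall n, u n = RtoC 0) -> CSeries u = RtoC 0.
Proof.
  intros H. unfold CSeries.
  rewrite (Series_ext (fun k => fst (u k)) (fun _ => 0)) by (intros; rewrite H; reflexivity).
  rewrite (Series_ext (fun k => snd (u k)) (fun _ => 0)) by (intros; rewrite H; reflexivity).
  rewrite Series_zero. reflexivity.
Qed.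

Lemma CS_shift u B : Cdom u B -> CSeries u = Cplus (u O) (CSeries (fun k => u (S k))).
Proof.
  intros Hu. unfold CSeries.
  rewrite (Series_incr_1 (fun n => fst (u n))) by (eapply Cdom_fst; eauto).
  rewrite (Series_incr_1 (fun n => snd (u n))) by (eapply Cdom_snd; eauto).
  reflexivity.
Qed.

Lemma CS_incr_n u n : (forall k, (k < n)%nat -> u k = RtoC 0) ->
  CSeries u = CSeries (fun k => u (n + k)%nat).
Proof.
  intros H. unfold CSeries. f_equal.
  - apply (Series_incr_n_aux (fun k => fst (u k))); intros k Hk; rewrite H; auto.
  - apply (Series_incr_n_aux (fun k => snd (u k))); intros k Hk; rewrite H; auto.
Qed.

Lemma CS_single (x : C) M :
  CSeries (fun N => if Nat.eqb N M then x else RtoC 0) = x.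
Proof.
  rewrite (CS_incr_n _ M).
  2:{ intros k Hk. destruct (Nat.eqb_spec k M); [lia|reflexivity]. }
  rewrite (CS_shift _ (fun n => if Nat.eqb n 0 then Cmod x else 0)).
  - rewrite CS_zero. rewrite Nat.add_0_r, Nat.eqb_refl. apply Cplus_0_r.
    intros n. destruct (Nat.eqb_spec (M + S n) M); [lia|reflexivity].
  - split.
    + intros n. destruct (Nat.eqb_spec (M + n) M), (Nat.eqb_spec n 0); try lia; try lra.
      rewrite Cmod_0; lra.
    + exists (Cmod x).
      assert (HH : is_lim_seq (sum_n (fun n => if Nat.eqb n 0 then Cmod x else 0)) (Cmod x)).
      2: exact HH.
      apply (is_lim_seq_ext (fun _ => Cmod x)). 2: apply is_lim_seq_const.
      intros n; induction n. rewrite sum_O; auto. rewrite sum_Sn, <- IHn. unfold plus; simpl; ring.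
Qed.

Lemma CS_fubini (a : nat -> nat -> C) (b : nat -> nat -> R) :
  (forall m n, Cmod (a m n) <= b m n) -> (forall m, ex_series (b m)) ->
  ex_series (fun m => Series (b m)) ->
  CSeries (fun m => CSeries (a m)) = CSeries (fun n => CSeries (fun m => a m n)).
Proof.
  intros Ha Hb HB. unfold CSeries. simpl. f_equal.
  - apply (fub_R (fun m n => fst (a m n)) b); auto. intros; eapply Rle_trans; [apply fst_le_Cmod|auto].
  - apply (fub_R (fun m n => snd (a m n)) b); auto. intros; eapply Rle_trans; [apply snd_le_Cmod|auto].
Qed.

Lemma cpow_add z m n : cpow z (m + n) = Cmult (cpow z m) (cpow z n).
Proof. induction m; simpl. ring. rewrite IHm. ring. Qed.

Lemma Cmod_cpow z n : Cmod (cpow z n) = Cmod z ^ n.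
Proof. induction n; simpl. apply Cmod_1. rewrite Cmod_mult, IHn. reflexivity. Qed.

Definition rho (q : C) := 2 / (1 + Cmod q).

Lemma rho_facts q : Cmod q < 1 -> 1 < rho q /\ 0 <= rho q * Cmod q < 1.
Proof.
  intros hq. pose proof (Cmod_ge_0 q). unfold rho.
  split. apply (Rmult_lt_reg_r (1 + Cmod q)); [lra|]. field_simplify; lra.
  split. apply Rmult_le_pos; [apply Rlt_le, Rdiv_lt_0_compat|]; lra.
  apply (Rmult_lt_reg_r (1 + Cmod q)); [lra|]. field_simplify; lra.
Qed.

Lemma Series_geom x : 0 <= x < 1 -> Series (fun n => x ^ n) = / (1 - x).
Proof. intros. apply is_series_unique, is_series_geom. rewrite Rabs_right; lra. Qed.

Lemma ex_geom c x : 0 <= x < 1 -> ex_series (fun n => c * x ^ n).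
Proof.
  intros. apply (ex_series_scal_l (K:=R_AbsRing) (V:=R_NormedModule) c (fun n => x ^ n)).
  apply ex_series_geom. rewrite Rabs_right; lra.
Qed.

Lemma Series_geom_c c x : 0 <= x < 1 -> Series (fun n => c * x ^ n) = c / (1 - x).
Proof. intros. rewrite Series_scal_l, Series_geom; auto. Qed.

Lemma gtail c x m : 0 <= x < 1 ->
  ex_series (fun N => if Nat.leb m N then c * x ^ N else 0) /\
  Series (fun N => if Nat.leb m N then c * x ^ N else 0) = c * x ^ m / (1 - x).
Proof.
  intros Hx.
  assert (E : forall k, (if Nat.leb m (m + k) then c * x ^ (m + k) else 0) = (c * x ^ m) * x ^ k).
  { intros k. rewrite (proj2 (Nat.leb_le _ _)) by lia. rewrite pow_add. ring. }
  split.
  - apply (ex_series_incr_n (K:=R_AbsRing) (V:=R_NormedModule) _ m).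
    apply (ex_series_ext (fun k => (c * x ^ m) * x ^ k)). intros; rewrite E; auto.
    apply ex_geom; auto.
  - rewrite (Series_incr_n_aux _ m).
    rewrite (Series_ext _ _ E). apply Series_geom_c; auto.
    intros k Hk. rewrite (proj2 (Nat.leb_gt _ _)) by lia. reflexivity.
Qed.

Definition cN (q : C) (N : nat) : C := CSeries (fun k => cpow q (S k * N)).

Lemma pow_SkN (r : R) k N : 0 <= r <= 1 -> (1 <= N)%nat -> r ^ (S k * N) <= r ^ N * r ^ k.
Proof.
  intros Hr HN. rewrite <- pow_add. apply pow_decr; auto. simpl. nia.
Qed.

Lemma geo_dom q a N : Cmod q < 1 -> (1 <= N)%nat ->
  Cdom (fun k => Cmult a (cpow q (S k * N))) (fun k => (Cmod a * Cmod q ^ N) * Cmod q ^ k).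
Proof.
  intros hq HN. pose proof (Cmod_ge_0 q). split.
  - intros k. rewrite Cmod_mult, Cmod_cpow, Rmult_assoc.
    apply Rmult_le_compat_l. apply Cmod_ge_0. apply pow_SkN; auto; lra.
  - apply ex_geom; lra.
Qed.

Lemma cN_dom q N : Cmod q < 1 -> (1 <= N)%nat ->
  Cdom (fun k => cpow q (S k * N)) (fun k => (Cmod q ^ N) * Cmod q ^ k).
Proof.
  intros hq HN. destruct (geo_dom q (RtoC 1) N hq HN) as [H1 H2]. split.
  - intros k. specialize (H1 k). rewrite Cmult_1_l, Cmod_1, Rmult_1_l in H1. exact H1.
  - eapply ex_series_ext; [|exact H2]. intros; simpl. rewrite Cmod_1; ring.
Qed.

Lemma Rop_eq q f N : Cmod q < 1 -> f O = RtoC 0 -> Rop q f N = Cmult (f N) (cN q N).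
Proof.
  intros hq H0. unfold Rop, cN. destruct N as [|N].
  - rewrite H0, Cmult_0_l. apply CS_zero. intros; apply Cmult_0_l.
  - apply (CS_scal _ _ _ (cN_dom q (S N) hq ltac:(lia))).
Qed.

Lemma cN_bound q N : Cmod q < 1 -> (1 <= N)%nat -> Cmod (cN q N) <= 2 * (Cmod q ^ N / (1 - Cmod q)).
Proof.
  intros hq HN. pose proof (Cmod_ge_0 q). eapply Rle_trans. apply CS_bound, cN_dom; auto.
  rewrite Series_geom_c; [lra|lra].
Qed.

Definition delta (M : nat) : PS := fun N => if Nat.eqb N M then RtoC 1 else RtoC 0.

Lemma ps_one_delta : ps_one = delta O.
Proof. apply functional_extensionality; intros [|n]; reflexivity. Qed.

Lemma Yop_plus f g N : Yop (fun n => Cplus (f n) (g n)) N = Cplus (Yop f N) (Yop g N).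
Proof. induction N. rewrite !Yop_0; ring. rewrite !Yop_S, IHN. ring. Qed.

Lemma Yop_scal c f N : Yop (fun n => Cmult c (f n)) N = Cmult c (Yop f N).
Proof. induction N. rewrite !Yop_0; ring. rewrite !Yop_S, IHN. ring. Qed.

Lemma ev_0 q w f : Cmod q < 1 -> f O = RtoC 0 -> ev q w f O = RtoC 0.
Proof.
  intros hq H. induction w as [|[|] w IH]; simpl; auto.
  - rewrite Rop_eq; auto. rewrite IH; ring.
  - apply Yop_0.
Qed.

Lemma ev_plus q w f g N : Cmod q < 1 -> f O = RtoC 0 -> g O = RtoC 0 ->
  ev q w (fun n => Cplus (f n) (g n)) N = Cplus (ev q w f N) (ev q w g N).
Proof.
  intros hq Hf Hg. assert (Hfg : (fun n => Cplus (f n) (g n)) O = RtoC 0) by (simpl; rewrite Hf, Hg; ring).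
  revert N. induction w as [|[|] w IH]; intros N; simpl; auto.
  - rewrite (Rop_eq q (ev q w _)) by (auto; apply ev_0; auto).
    rewrite (Rop_eq q (ev q w f)) by (auto; apply ev_0; auto).
    rewrite (Rop_eq q (ev q w g)) by (auto; apply ev_0; auto).
    rewrite IH. ring.
  - rewrite (functional_extensionality _ _ IH). apply Yop_plus.
Qed.

Lemma ev_scal q w c f N : Cmod q < 1 -> f O = RtoC 0 ->
  ev q w (fun n => Cmult c (f n)) N = Cmult c (ev q w f N).
Proof.
  intros hq Hf. assert (Hcf : (fun n => Cmult c (f n)) O = RtoC 0) by (simpl; rewrite Hf; ring).
  revert N. induction w as [|[|] w IH]; intros N; simpl; auto.
  - rewrite (Rop_eq q (ev q w _)) by (auto; apply ev_0; auto).
    rewrite (Rop_eq q (ev q w f)) by (auto; apply ev_0; auto).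
    rewrite IH. ring.
  - rewrite (functional_extensionality _ _ IH). apply Yop_scal.
Qed.

Definition Bd (q : C) (f : PS) (C0 : R) := forall N, Cmod (f N) <= C0 * rho q ^ N.
Definition Sup (f : PS) (m : nat) := forall N, (N < m)%nat -> f N = RtoC 0.

Lemma Rop_bound q f C0 : Cmod q < 1 -> f O = RtoC 0 -> 0 <= C0 -> Bd q f C0 ->
  forall N, Cmod (Rop q f N) <= (2 * C0 / (1 - Cmod q)) * (rho q * Cmod q) ^ N.
Proof.
  intros hq H0 HC Hb N. pose proof (Cmod_ge_0 q). destruct (rho_facts q hq) as [Hr1 Hr2].
  assert (Hk : 0 <= 2 * C0 / (1 - Cmod q)) by (apply Rmult_le_pos; [lra|apply Rlt_le, Rinv_0_lt_compat; lra]).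
  rewrite Rop_eq by auto. rewrite Cmod_mult. destruct N as [|N].
  - rewrite H0, Cmod_0. simpl. lra.
  - eapply Rle_trans. apply Rmult_le_compat; try apply Cmod_ge_0. apply Hb.
    apply cN_bound; auto; lia.
    rewrite Rpow_mult_distr. apply Req_le. field. lra.
Qed.

Lemma Rop_Sup q f m : Cmod q < 1 -> (1 <= m)%nat -> Sup f m -> Sup (Rop q f) m.
Proof.
  intros hq Hm H N HN. rewrite Rop_eq by (auto; apply H; lia). rewrite H by lia. ring.
Qed.

Lemma Yop_Sup f m : Sup f m -> Sup (Yop f) m.
Proof.
  intros H N HN. induction N. apply Yop_0. rewrite Yop_S, IHN by lia. rewrite H by lia. ring.
Qed.

Lemma Yop_bound q f C0 : Cmod q < 1 -> 0 <= C0 -> Bd q f C0 -> Bd q (Yop f) (C0 / (rho q - 1)).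
Proof.
  intros hq HC Hb. destruct (rho_facts q hq) as [Hr1 Hr2].
  assert (Hk : 0 <= C0 / (rho q - 1)) by (apply Rmult_le_pos; [lra|apply Rlt_le, Rinv_0_lt_compat; lra]).
  assert (Hc : forall N, Cmod (Yop f N) <= C0 / (rho q - 1) * (rho q ^ N - 1)).
  { induction N. rewrite Yop_0, Cmod_0. simpl. lra.
    rewrite Yop_S. eapply Rle_trans. apply Cmod_triangle.
    eapply Rle_trans. apply Rplus_le_compat. apply IHN. apply Hb.
    apply Req_le. simpl. field. lra. }
  intros N. eapply Rle_trans. apply Hc. apply Rmult_le_compat_l; auto. lra.
Qed.

Lemma ev_bound q w : Cmod q < 1 -> exists Kw, 0 <= Kw /\
  forall f C0 m, (1 <= m)%nat -> 0 <= C0 -> Sup f m -> Bd q f C0 ->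
  Sup (ev q w f) m /\ Bd q (ev q w f) (Kw * C0).
Proof.
  intros hq. pose proof (Cmod_ge_0 q). destruct (rho_facts q hq) as [Hr1 Hr2].
  induction w as [|[|] w [Kw [HK IH]]].
  - exists 1. split; [lra|]. intros f C0 m Hm HC Hs Hb. split; auto.
    intros N. rewrite Rmult_1_l. apply Hb.
  - exists (2 * Kw / (1 - Cmod q)). split.
    { apply Rmult_le_pos; [lra|apply Rlt_le, Rinv_0_lt_compat; lra]. }
    intros f C0 m Hm HC Hs Hb. destruct (IH f C0 m Hm HC Hs Hb) as [Hs' Hb'].
    simpl. split. apply Rop_Sup; auto.
    intros N. eapply Rle_trans.
    apply (Rop_bound q _ (Kw * C0) hq (Hs' O ltac:(lia)) ltac:(apply Rmult_le_pos; auto) Hb').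
    rewrite Rpow_mult_distr.
    replace (2 * (Kw * C0) / (1 - Cmod q) * (rho q ^ N * Cmod q ^ N)) with
      ((2 * Kw / (1 - Cmod q) * C0 * rho q ^ N) * Cmod q ^ N) by (field; lra).
    rewrite <- (Rmult_1_r (2 * Kw / (1 - Cmod q) * C0 * rho q ^ N)) at 2.
    apply Rmult_le_compat_l. apply Rmult_le_pos. apply Rmult_le_pos.
    apply Rmult_le_pos; [lra|apply Rlt_le, Rinv_0_lt_compat; lra]. auto. apply pow_le; lra.
    apply pow_le1; lra.
  - exists (Kw / (rho q - 1)). split.
    { apply Rmult_le_pos; [lra|apply Rlt_le, Rinv_0_lt_compat; lra]. }
    intros f C0 m Hm HC Hs Hb. destruct (IH f C0 m Hm HC Hs Hb) as [Hs' Hb'].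
    simpl. split. apply Yop_Sup; auto.
    replace (Kw / (rho q - 1) * C0) with (Kw * C0 / (rho q - 1)) by (field; lra).
    apply Yop_bound; auto. apply Rmult_le_pos; auto.
Qed.

Definition T (q : C) (w : list letter) (f : PS) (K : nat) : C :=
  CSeries (fun N => Cmult (ev q w f N) (cpow q (K * N))).

Definition TB (q : C) (C0 : R) (K m : nat) : nat -> R :=
  fun N => if Nat.leb m N then (C0 * Cmod q ^ (K - 1)) * (rho q * Cmod q) ^ N else 0.

Lemma T_dom q (h : PS) C0 K m : Cmod q < 1 -> (1 <= K)%nat -> (1 <= m)%nat -> 0 <= C0 ->
  Sup h m -> Bd q h C0 ->
  Cdom (fun N => Cmult (h N) (cpow q (K * N))) (TB q C0 K m).
Proof.
  intros hq HK Hm HC Hs Hb. pose proof (Cmod_ge_0 q). destruct (rho_facts q hq) as [Hr1 Hr2].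
  split.
  - intros N. unfold TB. destruct (Nat.leb_spec m N).
    + rewrite Cmod_mult, Cmod_cpow. eapply Rle_trans.
      apply Rmult_le_compat_r. apply pow_le; auto. apply Hb.
      assert (Hp : Cmod q ^ (K * N) <= Cmod q ^ N * Cmod q ^ (K - 1)).
      { rewrite <- pow_add. apply pow_decr. lra. nia. }
      rewrite Rpow_mult_distr.
      replace (C0 * Cmod q ^ (K - 1) * (rho q ^ N * Cmod q ^ N)) with
        ((C0 * rho q ^ N) * (Cmod q ^ N * Cmod q ^ (K - 1))) by ring.
      apply Rmult_le_compat_l; auto. apply Rmult_le_pos; auto. apply pow_le; lra.
    + rewrite Hs by lia. rewrite Cmult_0_l, Cmod_0. lra.
  - apply gtail; lra.
Qed.

Lemma T_bound_gen q (h : PS) C0 K m : Cmod q < 1 -> (1 <= K)%nat -> (1 <= m)%nat -> 0 <= C0 ->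
  Sup h m -> Bd q h C0 ->
  Cmod (CSeries (fun N => Cmult (h N) (cpow q (K * N)))) <=
    2 * (C0 * Cmod q ^ (K - 1) * (rho q * Cmod q) ^ m / (1 - rho q * Cmod q)).
Proof.
  intros. destruct (rho_facts q H) as [Hr1 Hr2].
  eapply Rle_trans. apply CS_bound. apply T_dom; eauto.
  unfold TB. rewrite (proj2 (gtail _ _ m Hr2)). lra.
Qed.

Lemma L_Dl q w g C0 m K : Cmod q < 1 -> (1 <= m)%nat -> 0 <= C0 -> Sup g m -> Bd q g C0 ->
  T q (LD :: w) g K = CSeries (fun k => T q w g (K + S k)).
Proof.
  intros hq Hm HC Hs Hb. pose proof (Cmod_ge_0 q). destruct (rho_facts q hq) as [Hr1 Hr2].
  destruct (ev_bound q w hq) as [Kw [HK HW]].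
  destruct (HW g C0 m Hm HC Hs Hb) as [Hs' Hb'].
  set (h := ev q w g) in *. set (C1 := Kw * C0) in *.
  assert (HC1 : 0 <= C1) by (apply Rmult_le_pos; auto).
  assert (H0 : h O = RtoC 0) by (apply Hs'; lia).
  unfold T. simpl. fold h.
  rewrite (CS_ext _ (fun N => CSeries (fun k => Cmult (h N) (cpow q ((K + S k) * N))))).
  2: { intros N. rewrite Rop_eq by auto. destruct N as [|N].
       - rewrite H0. rewrite CS_zero. { ring. } intros; apply Cmult_0_l.
       - rewrite (CS_ext _ (fun k => Cmult (Cmult (h (S N)) (cpow q (K * S N))) (cpow q (S k * S N)))).
         2: { intros k. rewrite Nat.mul_add_distr_r, cpow_add. ring. }
         rewrite (CS_scal _ _ _ (cN_dom q (S N) hq ltac:(lia))). unfold cN. ring. }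
  apply (CS_fubini _ (fun N k => (C1 * (rho q * Cmod q) ^ N) * Cmod q ^ k)).
  - intros N k. destruct N as [|N].
    + rewrite H0, Cmult_0_l, Cmod_0. apply Rmult_le_pos. apply Rmult_le_pos; auto. apply pow_le; lra.
      apply pow_le; lra.
    + rewrite Cmod_mult, Cmod_cpow. eapply Rle_trans.
      apply Rmult_le_compat_r. apply pow_le; auto. apply Hb'.
      rewrite Rpow_mult_distr, !Rmult_assoc. apply Rmult_le_compat_l; auto.
      apply Rmult_le_compat_l. apply pow_le; lra.
      rewrite <- pow_add. apply pow_decr. lra. nia.
  - intros N. apply ex_geom; lra.
  - apply (ex_series_ext (fun N => (C1 / (1 - Cmod q)) * (rho q * Cmod q) ^ N)).
    intros N. rewrite Series_geom_c by lra. replace (C1 / (1 - Cmod q) * (rho q * Cmod q) ^ N) with (C1 * (rho q * Cmod q) ^ N / (1 - Cmod q)) by (field; lra). reflexivity.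
    apply ex_geom; lra.
Qed.

Lemma Cdom_plus u v B1 B2 : Cdom u B1 -> Cdom v B2 ->
  Cdom (fun n => Cplus (u n) (v n)) (fun n => B1 n + B2 n).
Proof.
  intros [H1 E1] [H2 E2]. split.
  - intros n. eapply Rle_trans. apply Cmod_triangle. apply Rplus_le_compat; auto.
  - apply (@ex_series_plus R_AbsRing R_NormedModule); auto.
Qed.

Lemma cancel_contr (d z : C) : Cmod z < 1 -> d = Cmult z d -> d = RtoC 0.
Proof.
  intros Hz Hd. apply Cmod_eq_0. pose proof (Cmod_ge_0 d). pose proof (Cmod_ge_0 z).
  assert (E : Cmod d = Cmod z * Cmod d) by (rewrite <- Cmod_mult; congruence).
  nra.
Qed.

Lemma L_Yl q w g C0 m K : Cmod q < 1 -> (1 <= K)%nat -> (1 <= m)%nat -> 0 <= C0 -> Sup g m -> Bd q g C0 ->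
  T q (LY :: w) g K = Cmult (cN q K) (T q w g K).
Proof.
  intros hq HK Hm HC Hs Hb. pose proof (Cmod_ge_0 q). destruct (rho_facts q hq) as [Hr1 Hr2].
  destruct (ev_bound q w hq) as [Kw [HKw HW]].
  destruct (HW g C0 m Hm HC Hs Hb) as [Hs' Hb'].
  set (h := ev q w g) in *. set (C1 := Kw * C0) in *.
  assert (HC1 : 0 <= C1) by (apply Rmult_le_pos; auto).
  assert (HC2 : 0 <= C1 / (rho q - 1)) by (apply Rmult_le_pos; [lra|apply Rlt_le, Rinv_0_lt_compat; lra]).
  pose proof (T_dom q h C1 K m hq HK Hm HC1 Hs' Hb') as dH.
  pose proof (T_dom q (Yop h) _ K m hq HK Hm HC2 (Yop_Sup _ _ Hs') (Yop_bound q h C1 hq HC1 Hb')) as dS.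
  unfold T. simpl. fold h.
  set (S0 := CSeries (fun N => Cmult (Yop h N) (cpow q (K * N)))).
  set (H0 := CSeries (fun N => Cmult (h N) (cpow q (K * N)))).
  set (z := cpow q K).
  assert (E1 : S0 = Cmult z (Cplus S0 H0)).
  { unfold S0 at 1. rewrite (CS_shift _ _ dS). rewrite Yop_0, Cmult_0_l, Cplus_0_l.
    rewrite (CS_ext _ (fun N => Cmult z (Cplus (Cmult (Yop h N) (cpow q (K * N))) (Cmult (h N) (cpow q (K * N)))))).
    2: { intros N. rewrite Yop_S. replace (K * S N)%nat with (K + K * N)%nat by lia.
         rewrite cpow_add. unfold z. ring. }
    rewrite (CS_scal _ _ _ (Cdom_plus _ _ _ _ dS dH)).
    rewrite (CS_plus _ _ _ _ dS dH). reflexivity. }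
  assert (E2 : cN q K = Cplus z (Cmult z (cN q K))).
  { unfold cN at 1. rewrite (CS_shift _ _ (cN_dom q K hq HK)).
    rewrite (CS_ext (fun k => cpow q (S (S k) * K)) (fun k => Cmult z (cpow q (S k * K)))).
    2: { intros k. change (S (S k) * K)%nat with (K + S k * K)%nat. rewrite cpow_add. reflexivity. }
    rewrite (CS_scal _ _ _ (cN_dom q K hq HK)). unfold z. simpl. rewrite Nat.add_0_r. reflexivity. }
  assert (Hz : Cmod z < 1).
  { unfold z. rewrite Cmod_cpow. destruct K; [lia|]. simpl.
    pose proof (pow_le1 (Cmod q) K ltac:(lra)). pose proof (pow_le (Cmod q) K H). nra. }
  assert (Ed : Cminus S0 (Cmult (cN q K) H0) = RtoC 0).
  { apply (cancel_contr _ z Hz).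
    rewrite E1 at 1. rewrite E2 at 1. ring. }
  apply (f_equal (fun x => Cplus x (Cmult (cN q K) H0))) in Ed.
  rewrite Cplus_0_l in Ed. rewrite <- Ed. ring.
Qed.

Lemma delta_Sup M : Sup (delta M) M.
Proof. intros N HN. unfold delta. destruct (Nat.eqb_spec N M); [lia|reflexivity]. Qed.

Lemma delta_Bd q M : Cmod q < 1 -> Bd q (delta M) 1.
Proof.
  intros hq N. destruct (rho_facts q hq) as [Hr1 Hr2]. unfold delta. rewrite Rmult_1_l.
  assert (1 <= rho q ^ N) by (apply pow_R1_Rle; lra).
  destruct (Nat.eqb N M); [rewrite Cmod_1|rewrite Cmod_0]; lra.
Qed.

Lemma Rop_delta q M : Cmod q < 1 -> (1 <= M)%nat ->
  Rop q (delta M) = fun N => Cmult (cN q M) (delta M N).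
Proof.
  intros hq HM. apply functional_extensionality; intros N.
  rewrite Rop_eq by (auto; apply delta_Sup; lia). unfold delta.
  destruct (Nat.eqb_spec N M); [subst; ring|ring].
Qed.

Lemma L_Dr q w M K : Cmod q < 1 -> (1 <= M)%nat -> (1 <= K)%nat ->
  T q (w ++ LD :: nil) (delta M) K = Cmult (cN q M) (T q w (delta M) K).
Proof.
  intros hq HM HK. destruct (ev_bound q w hq) as [Kw [HKw HW]].
  destruct (HW (delta M) 1 M HM ltac:(lra) (delta_Sup M) (delta_Bd q M hq)) as [Hs Hb].
  unfold T at 1. rewrite (CS_ext _ (fun N => Cmult (cN q M) (Cmult (ev q w (delta M) N) (cpow q (K * N))))).
  - apply CS_scal with (B := TB q (Kw * 1) K M). apply T_dom; auto. lra.
  - intros N. rewrite ev_app. simpl. rewrite Rop_delta by auto.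
    rewrite ev_scal; auto. ring. apply delta_Sup; lia.
Qed.

Definition G (M : nat) : PS := Yop (delta M).

Lemma G_val M N : G M N = if Nat.ltb M N then RtoC 1 else RtoC 0.
Proof.
  unfold G. induction N. rewrite Yop_0. destruct (Nat.ltb_spec M 0); [lia|reflexivity].
  rewrite Yop_S, IHN. unfold delta.
  destruct (Nat.ltb_spec M N), (Nat.ltb_spec M (S N)), (Nat.eqb_spec N M); try lia; ring.
Qed.

Lemma G_Sup M : Sup (G M) (S M).
Proof. intros N HN. rewrite G_val. destruct (Nat.ltb_spec M N); [lia|reflexivity]. Qed.

Lemma G_Bd q M : Cmod q < 1 -> Bd q (G M) 1.
Proof.
  intros hq N. destruct (rho_facts q hq) as [Hr1 Hr2]. rewrite G_val, Rmult_1_l.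
  assert (1 <= rho q ^ N) by (apply pow_R1_Rle; lra).
  destruct (Nat.ltb M N); [rewrite Cmod_1|rewrite Cmod_0]; lra.
Qed.

Lemma G_split M : G M = fun N => Cplus (delta (S M) N) (G (S M) N).
Proof.
  apply functional_extensionality; intros N. rewrite !G_val. unfold delta.
  destruct (Nat.ltb_spec M N), (Nat.ltb_spec (S M) N), (Nat.eqb_spec N (S M)); try lia; ring.
Qed.

Lemma series_from_tail (a e : nat -> R) x0 c y :
  (forall n, x0 = sum_n a n + e n) -> (forall n, Rabs (e n) <= c * y ^ n) -> 0 <= y < 1 ->
  Series a = x0.
Proof.
  intros He Hb Hy. apply is_series_unique.
  assert (L : is_lim_seq e 0).
  { apply (is_lim_seq_le_le (fun n => - (c * y ^ n)) e (fun n => c * y ^ n)).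
    - intros n. specialize (Hb n). split; [pose proof (Rle_abs (- e n)); rewrite Rabs_Ropp in H|pose proof (Rle_abs (e n))]; lra.
    - replace (Finite 0) with (Rbar_opp (Rbar_mult c 0)) by (simpl; f_equal; ring).
      apply -> is_lim_seq_opp. apply is_lim_seq_scal_l, is_lim_seq_geom. rewrite Rabs_right; lra.
    - replace (Finite 0) with (Rbar_mult c 0) by (simpl; f_equal; ring).
      apply is_lim_seq_scal_l, is_lim_seq_geom. rewrite Rabs_right; lra. }
  assert (L2 : is_lim_seq (sum_n a) x0).
  { apply (is_lim_seq_ext (fun n => x0 - e n)). intros n. rewrite (He n). ring.
    replace (Finite x0) with (Finite (x0 - 0)) by (f_equal; ring).
    apply is_lim_seq_minus'; auto. apply is_lim_seq_const. }
  exact L2.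
Qed.

Lemma L_Yr q w M K : Cmod q < 1 -> (1 <= K)%nat ->
  T q w (G M) K = CSeries (fun i => T q w (delta (M + S i)) K).
Proof.
  intros hq HK. pose proof (Cmod_ge_0 q). destruct (rho_facts q hq) as [Hr1 Hr2].
  destruct (ev_bound q w hq) as [Kw [HKw HW]].
  assert (dG : forall M', Cdom (fun N => Cmult (ev q w (G M') N) (cpow q (K * N))) (TB q (Kw * 1) K (S M'))).
  { intros M'. destruct (HW (G M') 1 (S M') ltac:(lia) ltac:(lra) (G_Sup M') (G_Bd q M' hq)) as [Hs Hb].
    apply T_dom; auto. lia. lra. }
  assert (dD : forall M', (1 <= M')%nat -> Cdom (fun N => Cmult (ev q w (delta M') N) (cpow q (K * N))) (TB q (Kw * 1) K M')).
  { intros M' HM'. destruct (HW (delta M') 1 M' HM' ltac:(lra) (delta_Sup M') (delta_Bd q M' hq)) as [Hs Hb].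
    apply T_dom; auto. lra. }
  assert (Tsplit : forall M', T q w (G M') K = Cplus (T q w (delta (S M')) K) (T q w (G (S M')) K)).
  { intros M'. unfold T at 1.
    rewrite (CS_ext _ (fun N => Cplus (Cmult (ev q w (delta (S M')) N) (cpow q (K * N)))
                                      (Cmult (ev q w (G (S M')) N) (cpow q (K * N))))).
    - apply (CS_plus _ _ _ _ (dD (S M') ltac:(lia)) (dG (S M'))).
    - intros N. rewrite (G_split M'). rewrite ev_plus; auto. ring.
      apply (G_Sup (S M')); lia. }
  set (t := fun i => T q w (delta (M + S i)) K).
  assert (Part : forall n, T q w (G M) K = Cplus (sum_n t n) (T q w (G (M + S n)) K)).
  { induction n.
    - rewrite sum_O. rewrite Tsplit. unfold t. rewrite Nat.add_1_r. reflexivity.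
    - rewrite sum_Sn. change (plus (sum_n t n) (t (S n))) with (Cplus (sum_n t n) (t (S n))).
      rewrite IHn. rewrite (Tsplit (M + S n)%nat).
      replace (S (M + S n)) with (M + S (S n))%nat by lia. unfold t.
      ring. }
  set (x := rho q * Cmod q).
  set (c := 2 * (Kw * 1 * Cmod q ^ (K - 1) * x ^ (S (S M)) / (1 - x))).
  assert (Tail : forall n, Cmod (T q w (G (M + S n)) K) <= c * x ^ n).
  { intros n. destruct (HW (G (M + S n)) 1 (S (M + S n)) ltac:(lia) ltac:(lra) (G_Sup _) (G_Bd q _ hq)) as [Hs Hb].
    eapply Rle_trans. apply (T_bound_gen q _ (Kw * 1) K (S (M + S n))); auto. lia. lra.
    unfold c. fold x. replace (S (M + S n)) with (S (S M) + n)%nat by lia. rewrite pow_add.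
    apply Req_le. field. unfold x; lra. }
  unfold CSeries at 1.
  rewrite (series_from_tail (fun i => fst (t i)) (fun n => fst (T q w (G (M + S n)) K)) (fst (T q w (G M) K)) c x).
  rewrite (series_from_tail (fun i => snd (t i)) (fun n => snd (T q w (G (M + S n)) K)) (snd (T q w (G M) K)) c x).
  - destruct (T q w (G M) K); reflexivity.
  - intros n. rewrite (Part n) at 1. rewrite sum_n_C. reflexivity.
  - intros n. eapply Rle_trans; [apply snd_le_Cmod|apply Tail].
  - unfold x; lra.
  - intros n. rewrite (Part n) at 1. rewrite sum_n_C. reflexivity.
  - intros n. eapply Rle_trans; [apply fst_le_Cmod|apply Tail].
  - unfold x; lra.
Qed.

Lemma T_app q w1 w2 f K : T q (w1 ++ w2) f K = T q w1 (ev q w2 f) K.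
Proof. unfold T. apply CS_ext; intros N. rewrite ev_app. reflexivity. Qed.

Lemma T_nil q M K : T q nil (delta M) K = cpow q (K * M).
Proof.
  unfold T. simpl. rewrite <- (CS_single (cpow q (K * M)) M). apply CS_ext; intros N.
  unfold delta. destruct (Nat.eqb_spec N M). subst; ring. ring.
Qed.

Lemma duality q w : Cmod q < 1 -> forall M K, (1 <= M)%nat -> (1 <= K)%nat ->
  T q w (delta M) K = T q (dual w) (delta K) M.
Proof.
  intros hq. induction w as [|[|] w IH]; intros M K HM HK.
  - simpl. unfold dual; simpl. rewrite !T_nil, Nat.mul_comm. reflexivity.
  - rewrite (L_Dl q w (delta M) 1 M K hq HM ltac:(lra) (delta_Sup M) (delta_Bd q M hq)).
    replace (dual (LD :: w)) with (dual w ++ LY :: nil) by (unfold dual; reflexivity).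
    rewrite T_app. simpl. fold (G K). rewrite L_Yr by auto.
    apply CS_ext; intros k. apply IH; lia.
  - rewrite (L_Yl q w (delta M) 1 M K hq HK HM ltac:(lra) (delta_Sup M) (delta_Bd q M hq)).
    replace (dual (LY :: w)) with (dual w ++ LD :: nil) by (unfold dual; reflexivity).
    rewrite L_Dr by auto. rewrite IH by auto. reflexivity.
Qed.

Definition Vw q w := ev q (LD :: w ++ LY :: nil) (delta O).

Lemma Vw_eq q w N : Vw q w N = Rop q (ev q w (G O)) N.
Proof. unfold Vw. change (LD :: w ++ LY :: nil) with ((LD :: w) ++ LY :: nil). rewrite ev_app. reflexivity. Qed.

Lemma V_dom q w : Cmod q < 1 -> exists B, Cdom (Vw q w) B.
Proof.
  intros hq. pose proof (Cmod_ge_0 q). destruct (rho_facts q hq) as [Hr1 Hr2].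
  destruct (ev_bound q w hq) as [Kw [HKw HW]].
  destruct (HW (G O) 1 1%nat ltac:(lia) ltac:(lra) (G_Sup O) (G_Bd q O hq)) as [Hs Hb].
  exists (fun N => (2 * (Kw * 1) / (1 - Cmod q)) * (rho q * Cmod q) ^ N). split.
  - intros N. rewrite Vw_eq. apply (Rop_bound q _ (Kw * 1) hq (Hs O ltac:(lia)) ltac:(lra) Hb).
  - apply ex_geom; lra.
Qed.

Lemma V_val q w : Cmod q < 1 ->
  CSeries (Vw q w) = CSeries (fun k => CSeries (fun i => T q w (delta (S i)) (S k))).
Proof.
  intros hq.
  transitivity (T q (LD :: w) (G O) O).
  { unfold T. apply CS_ext; intros N. rewrite Vw_eq. simpl. ring. }
  rewrite (L_Dl q w (G O) 1 1%nat O hq ltac:(lia) ltac:(lra) (G_Sup O) (G_Bd q O hq)).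
  apply CS_ext; intros k. simpl. apply L_Yr; auto. lia.
Qed.

Lemma V_sym q w : Cmod q < 1 -> CSeries (Vw q (dual w)) = CSeries (Vw q w).
Proof.
  intros hq. pose proof (Cmod_ge_0 q). destruct (rho_facts q hq) as [Hr1 Hr2].
  rewrite !V_val by auto.
  rewrite (CS_ext _ (fun k => CSeries (fun i => T q w (delta (S k)) (S i)))).
  2: { intros k. apply CS_ext; intros i. symmetry. apply duality; auto; lia. }
  destruct (ev_bound q w hq) as [Kw [HKw HW]].
  set (x := rho q * Cmod q).
  apply (CS_fubini _ (fun k i => (2 * Kw * x ^ (S k) / (1 - x)) * Cmod q ^ i)).
  - intros k i. destruct (HW (delta (S k)) 1 (S k) ltac:(lia) ltac:(lra) (delta_Sup _) (delta_Bd q _ hq)) as [Hs Hb].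
    eapply Rle_trans. apply (T_bound_gen q _ (Kw * 1) (S i) (S k)); auto; try lia; try lra.
    replace (S i - 1)%nat with i by lia. fold x. apply Req_le. field. unfold x; lra.
  - intros k. apply ex_geom; lra.
  - apply (ex_series_ext (fun k => (2 * Kw * x / (1 - x) / (1 - Cmod q)) * x ^ k)).
    + intros k. rewrite Series_geom_c by lra. simpl.
      replace (2 * Kw * x / (1 - x) / (1 - Cmod q) * x ^ k) with (2 * Kw * (x * x ^ k) / (1 - x) / (1 - Cmod q)) by (field; unfold x; lra).
      reflexivity.
    + apply ex_geom; unfold x; lra.
Qed.

Lemma repeat_snoc {A} (x : A) n : repeat x (S n) = repeat x n ++ x :: nil.
Proof. replace (S n) with (n + 1)%nat by lia. rewrite repeat_app. reflexivity. Qed.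

Lemma shape_combine (l1 t w2 : list letter) :
  l1 = LD :: t -> l1 = w2 ++ LY :: nil -> exists w, l1 = LD :: w ++ LY :: nil.
Proof.
  intros H1 H2. destruct w2 as [|x w2].
  - rewrite H1 in H2. discriminate.
  - rewrite H1 in H2. simpl in H2. injection H2 as Hx E. subst. exists w2. reflexivity.
Qed.

Lemma shape (l : nat) (alpha beta : nat -> nat) :
  (1 <= l)%nat -> (0 < alpha 1%nat)%nat -> (0 < beta l)%nat ->
  exists w, blocks (map (fun j => (alpha j, beta j)) (seq 1 l)) = LD :: w ++ LY :: nil.
Proof.
  intros hl ha hb.
  destruct l as [|l']; [lia|].
  assert (H1 : exists t, blocks (map (fun j => (alpha j, beta j)) (seq 1 (S l'))) = LD :: t).
  { simpl. destruct (alpha 1%nat) as [|a'] eqn:E; [lia|]. simpl. eexists; reflexivity. }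
  assert (H2 : exists w2, blocks (map (fun j => (alpha j, beta j)) (seq 1 (S l'))) = w2 ++ LY :: nil).
  { rewrite seq_S, map_app, blocks_app. simpl.
    destruct (beta (S l')) as [|b'] eqn:E; [lia|].
    rewrite repeat_snoc, app_nil_r, !app_assoc. eexists; reflexivity. }
  destruct H1 as [t H1], H2 as [w2 H2]. eapply shape_combine; eauto.
Qed.

Lemma dual_shape w : dual (LD :: w ++ LY :: nil) = LD :: dual w ++ LY :: nil.
Proof. unfold dual. simpl. rewrite map_app, rev_app_distr. reflexivity. Qed.

Theorem corollary3p4 (l : nat) (alpha beta : nat -> nat) (q : C)
  (hl : (1 <= l)%nat) (ha1 : (0 < alpha 1%nat)%nat) (hbl : (0 < beta l)%nat)
  (hq : (Cmod q < 1)%R) :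
  exists v : C,
    has_value_at_1 (nest q (map (fun j => (alpha j, beta j)) (seq 1 l))) v /\
    has_value_at_1 (nest q (map (fun j => (beta j, alpha j)) (rev (seq 1 l)))) v.
Proof.
  destruct (shape l alpha beta hl ha1 hbl) as [w Hw].
  assert (EL : nest q (map (fun j => (alpha j, beta j)) (seq 1 l)) = Vw q w).
  { rewrite (nest_ev q _ _ (eq_sym ps_one_delta)), Hw. reflexivity. }
  assert (ER : nest q (map (fun j => (beta j, alpha j)) (rev (seq 1 l))) = Vw q (dual w)).
  { replace (map (fun j => (beta j, alpha j)) (rev (seq 1 l))) with
      (rev (map (fun p => (snd p, fst p)) (map (fun j => (alpha j, beta j)) (seq 1 l)))).
    2: { rewrite map_map, map_rev. reflexivity. }
    rewrite (nest_ev q _ _ (eq_sym ps_one_delta)), blocks_dual, Hw, dual_shape. reflexivity. }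
  rewrite EL, ER.
  exists (CSeries (Vw q w)). split.
  - destruct (V_dom q w hq) as [B HB]. exact (CS_is _ _ HB).
  - rewrite <- (V_sym q w hq). destruct (V_dom q (dual w) hq) as [B HB]. exact (CS_is _ _ HB).
Qed.
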